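(* A language $L$ is regular if and only if there exists a constant-space verifier $V$ that never flips private coins, flips at most a constant number $r$ of public coins on every input (worst case, $r$ independent of the input), has no bound on its running time, and verifies $L$ with some error $\varepsilon<1/2$. In the class notation below: $\mathrm{IP}^{\mathrm{high}}(\mathrm{constant\ space},\ O(1)\ \mathrm{public\ random\ bits},\ \infty\ \mathrm{time})=\mathrm{REG}$.
   Context: Interactive proof systems. A verifier is a probabilistic Turing machine with a read-only input tape containing $\rhd w\lhd$ ($\rhd,\lhd$ end-markers; head starts on $\rhd$), a read-write work tape (initially blank), and a read-write communication cell shared with a prover (initially blank). Its finite state set has (not necessarily disjoint) subsets of private-coin-flipping states, public-coin-flipping states, and communication states (every public-coin state is a communication state), plus accept and reject states. In each step the verifier reads the input symbol, work-tape symbol and communication-cell symbol; if the state flips a private coin it obtains a fair random bit hidden from the prover; if it flips a public coin it obtains a fair random bit that is also revealed to the prover; the transition function then determines the new state, the symbol written on the work tape, the symbol written to the communication cell (if in a communication state), and moves of the input and work heads (left, right, stay). Each time the verifier writes to the communication cell, the prover overwrites it with a symbol that is an arbitrary (not necessarily computable) function of $w$, the history of public coin outcomes, and the communication symbols written so far; the prover does not see private coins, heads, work tape or state. The verifier halts on entering accept/reject; moving the input head beyond an end-marker (unless entering accept) or the work head off the left end means rejection; it may also run forever. $V$ verifies $L$ with error $\varepsilon=\max(\varepsilon^+,\varepsilon^-)$ where $\varepsilon^+,\varepsilon^-<1/2$ if (i) some prover makes $V$ halt and accept every $w\in L$ with probability at least $1-\varepsilon^+$, and (ii) for every prover and every $w\notin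 L$, $V$ halts and rejects with probability at least $1-\varepsilon^-$. A constant-space verifier uses $O(1)$ work-tape cells. $\mathrm{IP}^{\mathrm{high}}(\ldots)$ denotes the class of languages verifiable with some error $\varepsilon<1/2$ by verifiers obeying the listed resource bounds (given as worst-case functions of the input length $n$; a resource type not listed, here private coins, is unavailable; $\infty$ means unbounded). $\mathrm{REG}$ is the class of regular languages. *)

(* Defs.v *)
From Stdlib Require Import Reals.
From mathcomp Require Import all_boot.
Set Implicit Arguments. Unset Strict Implicit. Unset Printing Implicit Defensive.
Local Open Scope R_scope.

Inductive tsym (S : Type) := LEnd | Sym of S | REnd.
Arguments LEnd {S}. Arguments REnd {S}.

Inductive move := MoveL | Stay | MoveR.

(* A verifier over input alphabet Sigma.  Constant space: the work tape has
   the fixed number vk.+1 of cells (independent of the input). *)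
Record verifier (Sigma : finType) := Verifier {
  vQ : finType;
  vG : finType;
  vC : finType;
  vblankG : vG;
  vblankC : vC;
  vk : nat;
  vstart : vQ;
  vpriv : pred vQ;
  vpub : pred vQ;
  vcomm : pred vQ;
  vacc : pred vQ;
  vrej : pred vQ;
  vpub_comm : forall q, vpub q -> vcomm q;
  (* transition: state, input symbol, work symbol, comm symbol,
     private coin, public coin  |->
     new state, written work symbol, written comm symbol, input move, work move *)
  vdelta : vQ -> tsym Sigma -> vG -> vC -> bool -> bool ->
           vQ * vG * vC * move * move
}.

(* A prover: the symbol it writes is an arbitrary function of the input and
   of the transcript so far: the sequence of symbols written by the verifier,
   each paired with the public coin flipped at that step (if any). *)
Definition prover (Sigma : finType) (C : Type) :=
  seq Sigma -> seq (C * option bool) -> C.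

Record config (Sigma : finType) (V : verifier Sigma) := Config {
  cst : vQ V;
  cipos : nat;                             (* 0 = |>, |w|+1 = <| *)
  cwtape : {ffun 'I_(vk V).+1 -> vG V};
  cwpos : 'I_(vk V).+1;
  ccell : vC V;
  ctrans : seq (vC V * option bool);
  cnpriv : nat;
  cnpub : nat
}.

Inductive outcome (T : Type) := OAcc | ORej | ONext of T.
Arguments OAcc {T}. Arguments ORej {T}.

Definition tape_sym (S : Type) (w : seq S) (i : nat) : tsym S :=
  if i is j.+1 then
    (match ohead (drop j w) with Some x => Sym x | None => REnd end)
  else LEnd.

Definition move_in (S : Type) (w : seq S) (d : move) (i : nat) : option nat :=
  match d with
  | MoveL => if i is j.+1 then Some j else None
  | Stay => Some i
  | MoveR => if i == (size w).+1 then None else Some i.+1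
  end.

Definition move_work (k : nat) (d : move) (h : 'I_k.+1) : option 'I_k.+1 :=
  match d with
  | MoveL => if nat_of_ord h is j.+1 then Some (inord j) else None
  | Stay => Some h
  | MoveR => if nat_of_ord h == k then None else Some (inord h.+1)
  end.

Definition init_config (Sigma : finType) (V : verifier Sigma) : config V :=
  @Config Sigma V (vstart V) 0 [ffun => vblankG V] ord0 (vblankC V) [::] 0 0.

(* One step from a non-halting configuration c, with coin values bp (private)
   and bu (public); these are only meaningful when the state flips them. *)
Definition step (Sigma : finType) (V : verifier Sigma) (P : prover Sigma (vC V))
    (w : seq Sigma) (c : config V) (bp bu : bool) : outcome (config V) :=
  let q := cst c in
  let: (q', a, m, di, dw) :=
     vdelta q (tape_sym w (cipos c)) (cwtape c (cwpos c)) (ccell c) bp bu in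
  let tr' := if vcomm q then rcons (ctrans c) (m, if vpub q then Some bu else None)
             else ctrans c in
  let cc' := if vcomm q then P w tr' else ccell c in
  let tape' := [ffun j => if j == cwpos c then a else cwtape c j] in
  match move_work dw (cwpos c) with
  | None => ORej
  | Some h' =>
    if vacc q' then OAcc else
    match move_in w di (cipos c) with
    | None => ORej
    | Some i' =>
      ONext (@Config Sigma V q' i' tape' h' cc' tr'
               (cnpriv c + vpriv q)%N (cnpub c + vpub q)%N)
    end
  end.

Definition coin_avg (fp fu : bool) (g : bool -> bool -> R) : R :=
  match fp, fu with
  | true, true => ((g true true + g true false + g false true + g false false) / 4)
  | true, false => ((g true false + g false false) / 2)
  | false, true => ((g false true + g false false) / 2)
  | false, false => g false false
  end.

(* Probability of halting within n steps, weighted by va for accepting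
   and vr for rejecting halts. *)
Fixpoint within (Sigma : finType) (V : verifier Sigma) (P : prover Sigma (vC V))
    (w : seq Sigma) (va vr : R) (n : nat) (c : config V) : R :=
  match n with
  | 0 => 0
  | n'.+1 =>
    if vacc (cst c) then va else if vrej (cst c) then vr else
    coin_avg (vpriv (cst c)) (vpub (cst c))
      (fun bp bu => match step P w c bp bu with
                    | OAcc => va | ORej => vr
                    | ONext c' => within P w va vr n' c' end)
  end.

Definition accept_within Sigma V P w n := @within Sigma V P w 1 0 n (init_config V).
Definition reject_within Sigma V P w n := @within Sigma V P w 0 1 n (init_config V).

Definition sup_at_least (u : nat -> R) (p : R) : Prop :=
  forall d : R, (0 < d) -> exists n, (p - d <= u n).

Definition accept_prob_ge Sigma V (P : prover Sigma (vC V)) w p :=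
  sup_at_least (@accept_within Sigma V P w) p.
Definition reject_prob_ge Sigma V (P : prover Sigma (vC V)) w p :=
  sup_at_least (@reject_within Sigma V P w) p.

Definition verifies (Sigma : finType) (V : verifier Sigma)
    (L : seq Sigma -> Prop) (eps : R) : Prop :=
  (exists P : prover Sigma (vC V), forall w, L w -> accept_prob_ge P w (1 - eps)) /\
  (forall (P : prover Sigma (vC V)) w, ~ L w -> reject_prob_ge P w (1 - eps)).

(* Deterministic run for given coin streams (i-th private/public coin flip
   reads sp i / su i). *)
Fixpoint run (Sigma : finType) (V : verifier Sigma) (P : prover Sigma (vC V))
    (w : seq Sigma) (sp su : nat -> bool) (n : nat) : outcome (config V) :=
  match n with
  | 0 => ONext (init_config V)
  | n'.+1 =>
    match run P w sp su n' with
    | ONext c =>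
      if vacc (cst c) then OAcc else if vrej (cst c) then ORej else
      step P w c (vpriv (cst c) && sp (cnpriv c)) (vpub (cst c) && su (cnpub c))
    | o => o
    end
  end.

Definition no_private_coins (Sigma : finType) (V : verifier Sigma) : Prop :=
  forall q : vQ V, ~~ vpriv q.

Definition public_coins_bounded (Sigma : finType) (V : verifier Sigma) (r : nat) : Prop :=
  forall (P : prover Sigma (vC V)) w sp su n c,
    run P w sp su n = ONext c ->
    ~~ vacc (cst c) -> ~~ vrej (cst c) -> vpub (cst c) ->
    (cnpub c < r)%N.

Definition regular (Sigma : finType) (L : seq Sigma -> Prop) : Prop :=
  exists (Q : finType) (q0 : Q) (d : Q -> Sigma -> Q) (F : pred Q),
    forall w, L w <-> F (foldl d q0 w).

(* Main.v *)
Require Import Defs.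
From Stdlib Require Import Reals Lra ClassicalEpsilon Classical.
From mathcomp Require Import all_boot.
Set Implicit Arguments. Unset Strict Implicit. Unset Printing Implicit Defensive.
Local Open Scope R_scope.

Lemma coin_avg_le fp fu (g h : bool -> bool -> R) :
  (forall b b', g b b' <= h b b') -> coin_avg fp fu g <= coin_avg fp fu h.
Proof.
move=> H; case: fp; case: fu => /=;
 have := H true true; have := H true false; have := H false true; have := H false false; lra.
Qed.

Lemma coin_avg_ge0 fp fu (g : bool -> bool -> R) :
  (forall b b', 0 <= g b b') -> 0 <= coin_avg fp fu g.
Proof.
move=> H; case: fp; case: fu => /=;
 have := H true true; have := H true false; have := H false true; have := H false false; lra.
Qed.

Section Within.
Variables (Sigma : finType) (V : verifier Sigma) (P : prover Sigma (vC V)) (w : seq Sigma).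

Definition oval va vr n (o : outcome (config V)) :=
  match o with OAcc => va | ORej => vr | ONext c' => within P w va vr n c' end.

Lemma within_S va vr n c : within P w va vr n.+1 c =
  if vacc (cst c) then va else if vrej (cst c) then vr else
  coin_avg (vpriv (cst c)) (vpub (cst c)) (fun bp bu => oval va vr n (step P w c bp bu)).
Proof. by []. Qed.

Lemma within_bounds n c : 0 <= within P w 1 0 n c /\ 0 <= within P w 0 1 n c /\
   within P w 1 0 n c + within P w 0 1 n c <= 1.
Proof.
elim: n c => [|n IH] c; first by rewrite /=; lra.
rewrite !within_S.
case: (vacc _); first lra. case: (vrej _); first lra.
have H : forall o, 0 <= oval 1 0 n o /\ 0 <= oval 0 1 n o /\ oval 1 0 n o + oval 0 1 n o <= 1.
  by case=> [||c'] /=; [lra|lra|apply: IH].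
case: (vpriv _); case: (vpub _) => /=;
have := H (step P w c true true); have := H (step P w c true false);
have := H (step P w c false true); have := H (step P w c false false); lra.
Qed.

Lemma within_mono1 va vr : 0 <= va -> 0 <= vr -> forall n c,
  0 <= within P w va vr n c /\ within P w va vr n c <= within P w va vr n.+1 c.
Proof.
move=> ha hr; elim=> [|n IH] c.
  rewrite within_S /=. split; first lra.
  case: (vacc _) => //. case: (vrej _) => //.
  apply: coin_avg_ge0 => b b'; case: (step _ _ _ _ _) => //= *; lra.
split.
  rewrite within_S. case: (vacc _) => //. case: (vrej _) => //.
  apply: coin_avg_ge0 => b b'; case: (step _ _ _ _ _) => //= c'; by case: (IH c').
rewrite (within_S _ _ n.+1) within_S. case: (vacc _); first lra. case: (vrej _); first lra.
apply: coin_avg_le => b b'; case: (step _ _ _ _ _) => /= [||c']; try lra. by case: (IH c').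
Qed.

Lemma within_mono va vr : 0 <= va -> 0 <= vr -> forall n n' c, (n <= n')%N ->
  within P w va vr n c <= within P w va vr n' c.
Proof.
move=> ha hr n n' c /subnKC <-. elim: (n' - n)%N => [|k IH]; first by rewrite addn0; lra.
rewrite addnS. apply: Rle_trans IH _. by case: (within_mono1 ha hr (n + k) c).
Qed.

End Within.
Section Game.
Variables (Sigma : finType) (V : verifier Sigma) (r : nat).

Definition Kt := (vQ V * {ffun 'I_(vk V).+1 -> vG V} * 'I_(vk V).+1 * vC V)%type.
Definition Tt := 'I_(2 ^ r).+1.
Definition qof (k : Kt) : vQ V := k.1.1.1.

Definition lstep (k : Kt) (s : tsym Sigma) (a : vC V) (b : bool) : outcome (Kt * move) :=
  let: (q, tp, h, cl) := k in
  let: (q', x, mm, di, dw) := vdelta q s (tp h) cl false b in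
  match move_work dw h with
  | None => ORej
  | Some h' => if vacc q' then OAcc else
      ONext ((q', [ffun j => if j == h then x else tp j], h', if vcomm q then a else cl), di)
  end.

Section G.
Variables (sym : nat -> tsym Sigma) (mv : move -> nat -> option nat) (ins : pred nat)
  (Goal : Kt -> nat -> Tt -> Prop).

Definition RWof (X : Kt -> nat -> Tt -> Prop) k i a b (m : Tt) :=
  nat_of_ord m = 0%N \/ lstep k (sym i) a b = OAcc \/
  exists k' d i', lstep k (sym i) a b = ONext (k', d) /\ mv d i = Some i' /\ X k' i' m.

Definition Fop (X : Kt -> nat -> Tt -> Prop) k i (m : Tt) :=
  nat_of_ord m = 0%N \/
  (~~ ins i /\ Goal k i m) \/
  (ins i /\ (vacc (qof k) \/ (~~ vacc (qof k) /\ ~~ vrej (qof k) /\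
     ((~~ vpub (qof k) /\ exists a, RWof X k i a false m) \/
      (vpub (qof k) /\ exists a0 a1 (m0 m1 : Tt), (2 * m <= m0 + m1)%N /\
          RWof X k i a0 false m0 /\ RWof X k i a1 true m1))))).

Definition GW k i m := forall X : Kt -> nat -> Tt -> Prop,
  (forall k i m, Fop X k i m -> X k i m) -> X k i m.

Lemma RWof_mono (X Y : Kt -> nat -> Tt -> Prop) k i a b m :
  (forall k i m, X k i m -> Y k i m) -> RWof X k i a b m -> RWof Y k i a b m.
Proof.
move=> H [h|[h|[k' [d [i' [h1 [h2 h3]]]]]]]; [left|right;left|right;right] => //.
by exists k', d, i'; split; [|split; [|apply: H]].
Qed.

Lemma Fop_mono (X Y : Kt -> nat -> Tt -> Prop) k i m :
  (forall k i m, X k i m -> Y k i m) -> Fop X k i m -> Fop Y k i m.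
Proof.
move=> H [h|[h|[hi h]]]; [by left|by right;left|right;right;split=> //].
case: h => [h|[h1 [h2 [[h3 [a h4]]|[h3 [a0 [a1 [m0 [m1 [h4 [h5 h6]]]]]]]]]]]; first by left.
- right; split=> //; split=> //; left; split=> //; exists a; exact: RWof_mono h4.
- right; split=> //; split=> //; right; split=> //; exists a0, a1, m0, m1.
  by split=> //; split; [exact: RWof_mono h5|exact: RWof_mono h6].
Qed.

Lemma GW_fold k i m : Fop GW k i m -> GW k i m.
Proof.
move=> h X HX. apply: (HX). apply: (Fop_mono (X := GW)) h => k1 i1 m1 H1. exact: H1 X HX.
Qed.

Lemma GW_ind (X : Kt -> nat -> Tt -> Prop) :
  (forall k i m, Fop (fun k i m => GW k i m /\ X k i m) k i m -> X k i m) ->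
  forall k i m, GW k i m -> X k i m.
Proof.
move=> H k i m h.
suff : GW k i m /\ X k i m by case.
apply: (h (fun k i m => GW k i m /\ X k i m)) => k' i' m' h'. split; last exact: H.
apply: GW_fold. apply: (Fop_mono (X := fun k i m => GW k i m /\ X k i m)) h' => ? ? ? []. done.
Qed.

Lemma GW_unfold k i m : GW k i m -> Fop GW k i m.
Proof.
apply: GW_ind => k' i' m' h. apply: (Fop_mono (X := fun k i m => GW k i m /\ Fop GW k i m)) h => ? ? ? [] _ . exact: GW_fold.
Qed.

Lemma GW0 k i (m : Tt) : nat_of_ord m = 0%N -> GW k i m.
Proof. by move=> h; apply: GW_fold; left. Qed.

End G.

Lemma Fop_transfer (sym1 sym2 : nat -> tsym Sigma) (mv1 mv2 : move -> nat -> option nat)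
  (ins1 ins2 : pred nat) (G1 G2 : Kt -> nat -> Tt -> Prop) (X Y : Kt -> nat -> Tt -> Prop) (k : Kt) (i j : nat) (m : Tt) :
  ins1 i -> ins2 j -> sym1 i = sym2 j ->
  (forall k' d i' m', mv1 d i = Some i' -> X k' i' m' -> exists j', mv2 d j = Some j' /\ Y k' j' m') ->
  Fop sym1 mv1 ins1 G1 X k i m -> Fop sym2 mv2 ins2 G2 Y k j m.
Proof.
move=> hi1 hi2 hs hmv.
have RW : forall a b m', RWof sym1 mv1 X k i a b m' -> RWof sym2 mv2 Y k j a b m'.
  move=> a b m' [h|[h|[k' [d [i' [h1 [h2 h3]]]]]]]; [by left|by right;left;rewrite -hs|].
  right; right. have [j' [hj1 hj2]] := hmv _ _ _ _ h2 h3.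
  by exists k', d, j'; rewrite -hs.
move=> [h|[[h _]|[_ h]]]; [by left| by rewrite hi1 in h|right;right;split=> //].
case: h => [h|[h1 [h2 [[h3 [a h4]]|[h3 [a0 [a1 [m0 [m1 [h4 [h5 h6]]]]]]]]]]]; first by left.
- right; split=> //; split=> //; left; split=> //; exists a; exact: RW.
- right; split=> //; split=> //; right; split=> //; exists a0, a1, m0, m1.
  by split=> //; split; apply: RW.
Qed.

Lemma GW_embed (sym1 sym2 : nat -> tsym Sigma) (mv1 mv2 : move -> nat -> option nat)
  (ins1 ins2 : pred nat) (G1 G2 : Kt -> nat -> Tt -> Prop) (s : nat) :
  (forall i, ins2 i -> ins1 (i + s)%N) ->
  (forall i, ins2 i -> sym2 i = sym1 (i + s)%N) ->
  (forall d i i', ins2 i -> mv2 d i = Some i' -> mv1 d (i + s)%N = Some (i' + s)%N) ->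
  (forall k i m, ~~ ins2 i -> G2 k i m -> GW sym1 mv1 ins1 G1 k (i + s)%N m) ->
  forall k i m, GW sym2 mv2 ins2 G2 k i m -> GW sym1 mv1 ins1 G1 k (i + s)%N m.
Proof.
move=> hins hsym hmv hG.
apply: (GW_ind (X := fun k i m => GW sym1 mv1 ins1 G1 k (i + s)%N m)) => k i m h.
have := h; case=> [h0|[[h1 h2]|[h1 _]]]; first exact: GW0.
  exact: hG.
apply: GW_fold. apply: (@Fop_transfer sym2 sym1 mv2 mv1 ins2 ins1 G2 G1 _ _ k i (i + s)%N m h1 (hins _ h1) (hsym _ h1) _ h).
move=> k' d i' m' hm [_ hx]. exists (i' + s)%N; split => //. exact: hmv.
Qed.

Lemma GW_goal_mono (sym : nat -> tsym Sigma) (mv : move -> nat -> option nat) (ins : pred nat) (G1 G2 : Kt -> nat -> Tt -> Prop) :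
  (forall k i m, G1 k i m -> G2 k i m) ->
  forall k i m, GW sym mv ins G1 k i m -> GW sym mv ins G2 k i m.
Proof.
move=> hG k i m h.
have := @GW_embed sym sym mv mv ins ins G2 G1 0 => /= H.
have := H _ _ _ _ k i m h; rewrite addn0; apply.
- by move=> i'; rewrite addn0.
- by move=> i'; rewrite addn0.
- by move=> d i1 i2; rewrite !addn0.
- move=> k1 i1 m1 hi hg; rewrite addn0; apply: GW_fold; right; left; split=> //; exact: hG.
Qed.


Lemma tape_cat_l (u z : seq Sigma) i : (i <= size u)%N -> tape_sym (u ++ z) i = tape_sym u i.
Proof.
case: i => [|j] //= hj. rewrite drop_cat hj.
case: (drop j u) (size_drop j u) => [|x s] //= h0.
by move: hj; rewrite -subn_gt0 -h0.
Qed.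

Lemma tape_cat_r (u z : seq Sigma) i : (0 < i)%N -> tape_sym (u ++ z) (i + size u) = tape_sym z i.
Proof.
case: i => [|j] //= _. by rewrite drop_cat ltnNge leq_addl /= addnK.
Qed.

Lemma move_cat_l (u z : seq Sigma) d i : (i <= size u)%N -> move_in (u ++ z) d i = move_in u d i.
Proof.
case: d => //= hi. rewrite size_cat.
have -> : (i == (size u + size z).+1) = false.
  by apply/negbTE; rewrite neq_ltn ltnS (leq_trans hi (leq_addr _ _)).
have -> : (i == (size u).+1) = false by apply/negbTE; rewrite neq_ltn ltnS hi.
done.
Qed.

Lemma move_cat_r (u z : seq Sigma) d i : (0 < i)%N ->
  move_in (u ++ z) d (i + size u) = omap (addn^~ (size u)) (move_in z d i).
Proof.
case: d => /=.
- by case: i.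
- done.
- move=> hi. rewrite size_cat -addnS [(size u + _)%N]addnC eqn_add2r.
  by case: (i == (size z).+1).
Qed.

Lemma move_range (w : seq Sigma) d i i' : move_in w d i = Some i' -> (i' <= i.+1)%N /\ (i <= i'.+1)%N.
Proof.
case: d => /=.
- by case: i => [|j] // [<-]; rewrite leqW.
- by move=> [<-]; rewrite leqnSn.
- by case: (i == _) => // [[<-]]; rewrite leqnn leqW.
Qed.

Definition Full (w : seq Sigma) := GW (tape_sym w) (move_in w) xpredT (fun _ _ _ => False).
Definition LG (u : seq Sigma) (B : Kt -> Tt -> Prop) :=
  GW (tape_sym u) (move_in u) (fun i => i <= size u)%N (fun k i m => i = (size u).+1 /\ B k m).
Definition RG (z : seq Sigma) (A : Kt -> Tt -> Prop) :=
  GW (tape_sym z) (move_in z) (fun i => 0 < i)%N (fun k i m => i = 0%N /\ A k m).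

Lemma Full_to_parts (u z : seq Sigma) (A' B' : Kt -> Tt -> Prop) :
  (forall k m, Full (u ++ z) k (size u) m -> LG u B' k (size u) m -> A' k m) ->
  (forall k m, Full (u ++ z) k (size u).+1 m -> RG z A' k 1 m -> B' k m) ->
  forall k i m, Full (u ++ z) k i m ->
    ((i <= size u)%N -> LG u B' k i m) /\ ((size u < i)%N -> RG z A' k (i - size u) m).
Proof.
move=> hA hB.
apply: GW_ind => k i m h.
have := h; case=> [h0|[[h1 _]|[_ h2]]]; first by split=> _; apply: GW0.
  by [].
split=> hi.
- apply: GW_fold.
  apply: (@Fop_transfer _ _ _ _ _ _ _ _ _ _ k i i m _ hi (tape_cat_l z hi) _ h) => //.
  move=> k' d i' m' hm [hF [hX1 hX2]]. exists i'; split; first by rewrite -(move_cat_l z).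
  have [r1 r2] := move_range hm.
  case: (leqP i' (size u)) => hi'; first exact: hX1.
  have ei : i' = (size u).+1 by apply/eqP; rewrite eqn_leq hi' (leq_trans r1) // ltnS.
  apply: GW_fold; right; left; split; first by rewrite -ltnNge.
  split=> //. apply: hB; first by rewrite -ei.
  have := hX2 hi'; rewrite ei subSn // subnn. done.
- have hj : (0 < i - size u)%N by rewrite subn_gt0.
  have ei : i = (i - size u + size u)%N by rewrite subnK // ltnW.
  apply: GW_fold.
  apply: (@Fop_transfer _ _ _ _ _ _ _ _ _ _ k i (i - size u) m _ hj _ _ h) => //.
    by rewrite {1}ei tape_cat_r.
  move=> k' d i' m' hm [hF [hX1 hX2]].
  move: hm; rewrite {1}ei move_cat_r //.
  case hz: (move_in z d (i - size u)) => [j''|] //= [ej].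
  exists j''; split=> //.
  have [r1 r2] := move_range hz.
  case: (posnP j'') => hj''.
  + apply: GW_fold; right; left; split; first by rewrite hj''.
    split=> //. have e : i' = size u by rewrite -ej hj''.
    apply: hA; rewrite -e //. by apply: hX1; rewrite e.
  + have := hX2; rewrite -ej addnK; apply.
    by rewrite -{1}(add0n (size u)) ltn_add2r.
Qed.

Lemma LG_to_Full (u z : seq Sigma) (B : Kt -> Tt -> Prop) :
  (forall k m, B k m -> Full (u ++ z) k (size u).+1 m) ->
  forall k i m, LG u B k i m -> Full (u ++ z) k i m.
Proof.
move=> hB k i m h.
have H := @GW_embed (tape_sym (u ++ z)) (tape_sym u) (move_in (u ++ z)) (move_in u) xpredT
  (fun i => i <= size u)%N (fun _ _ _ => False) (fun k i m => i = (size u).+1 /\ B k m) 0.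
have := H _ _ _ _ k i m h; rewrite addn0; apply => //.
- by move=> i' hi'; rewrite addn0 tape_cat_l.
- by move=> d i1 i2 hi1; rewrite !addn0 move_cat_l.
- by move=> k1 i1 m1 _ [-> hb]; rewrite addn0; apply: hB.
Qed.

Lemma RG_to_Full (u z : seq Sigma) (A : Kt -> Tt -> Prop) :
  (forall k m, A k m -> Full (u ++ z) k (size u) m) ->
  forall k i m, RG z A k i m -> Full (u ++ z) k (i + size u) m.
Proof.
move=> hA k i m h.
apply: (@GW_embed (tape_sym (u ++ z)) (tape_sym z) (move_in (u ++ z)) (move_in z) xpredT
  (fun i => 0 < i)%N (fun _ _ _ => False) (fun k i m => i = 0%N /\ A k m) (size u)) => //.
- by move=> i' hi'; rewrite tape_cat_r.
- by move=> d i1 i2 hi1 hm; rewrite move_cat_r // hm.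
- by move=> k1 i1 m1 _ [-> ha]; rewrite add0n; apply: hA.
Qed.

Definition Aw u z k m := Full (u ++ z) k (size u) m.
Definition Bw u z k m := Full (u ++ z) k (size u).+1 m.

Lemma fix1 u z k m : Aw u z k m <-> LG u (Bw u z) k (size u) m.
Proof.
split.
- move=> h. have [+ _] := Full_to_parts (A' := Aw u z) (B' := Bw u z) (fun k m h _ => h) (fun k m h _ => h) h.
  by apply.
- by apply: LG_to_Full.
Qed.

Lemma fix2 u z k m : Bw u z k m <-> RG z (Aw u z) k 1 m.
Proof.
split.
- move=> h. have [_ +] := Full_to_parts (A' := Aw u z) (B' := Bw u z) (fun k m h _ => h) (fun k m h _ => h) h.
  by rewrite subSn // subnn; apply.
- move=> h. have := RG_to_Full (fun k m h => h) h. by rewrite add1n.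
Qed.

Lemma fix0 u z k m : Full (u ++ z) k 0 m <-> LG u (Bw u z) k 0 m.
Proof.
split.
- move=> h. have [+ _] := Full_to_parts (A' := Aw u z) (B' := Bw u z) (fun k m h _ => h) (fun k m h _ => h) h.
  by apply.
- by apply: LG_to_Full.
Qed.

Lemma least u z (A' B' : Kt -> Tt -> Prop) :
  (forall k m, LG u B' k (size u) m -> A' k m) ->
  (forall k m, RG z A' k 1 m -> B' k m) ->
  forall k m, Bw u z k m -> B' k m.
Proof.
move=> hA hB k m h.
have [_ +] := Full_to_parts (A' := A') (B' := B') (fun k m _ h => hA k m h) (fun k m _ h => hB k m h) h.
rewrite subSn // subnn => H. exact: hB (H (ltnSn _)).
Qed.

Lemma nerode_game u v :
  (forall B k m, LG u B k (size u) m <-> LG v B k (size v) m) ->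
  (forall B k m, LG u B k 0 m <-> LG v B k 0 m) ->
  forall z k m, Full (u ++ z) k 0 m <-> Full (v ++ z) k 0 m.
Proof.
move=> h1 h0 z.
have eB : forall k m, Bw u z k m <-> Bw v z k m.
  move=> k m; split.
  - apply: (@least u z (Aw v z) (Bw v z)) => k' m' H.
    + by apply/fix1; apply/h1.
    + by apply/fix2.
  - apply: (@least v z (Aw u z) (Bw u z)) => k' m' H.
    + by apply/fix1; apply/h1.
    + by apply/fix2.
move=> k m.
rewrite fix0 fix0 h0.
split; apply: GW_goal_mono => k' i' m' [-> hb]; split=> //; by apply/eB.
Qed.

End Game.
Definition pb (P : Prop) : bool := if excluded_middle_informative P then true else false.
Lemma pbP (P : Prop) : pb P <-> P.
Proof. rewrite /pb; case: excluded_middle_informative => //. Qed.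

Lemma nerode_regular (Sigma : finType) (L : seq Sigma -> Prop) (Q : finType) (f : seq Sigma -> Q) :
  (forall u v, f u = f v -> forall z, L (u ++ z) <-> L (v ++ z)) -> regular L.
Proof.
move=> hf.
pose rep (s : Q) : seq Sigma :=
  match excluded_middle_informative (exists u, f u == s) with
  | left H => xchoose H | right _ => [::] end.
have hrep : forall u, f (rep (f u)) = f u.
  move=> u; rewrite /rep; case: excluded_middle_informative => [H|H].
    exact/eqP/(xchooseP H).
  by exfalso; apply: H; exists u.
pose d (s : Q) (a : Sigma) := f (rcons (rep s) a).
pose F (s : Q) := pb (L (rep s)).
have inv : forall p, exists p', foldl d (f [::]) p = f p' /\ forall z, L (p' ++ z) <-> L (p ++ z).
  elim/last_ind => [|p a [p' [e h]]]; first by exists [::].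
  exists (rcons (rep (f p')) a); split; first by rewrite foldl_rcons e.
  move=> z; rewrite !cat_rcons. rewrite (hf _ _ (hrep p')). exact: h.
exists Q, (f [::]), d, F => w.
have [p' [e h]] := inv w.
rewrite e /F pbP.
have := hf _ _ (hrep p') [::]; rewrite !cats0 => h1.
have := h [::]; rewrite !cats0 => h2.
tauto.
Qed.


Section Prover.
Variables (Sigma : finType) (V : verifier Sigma) (w : seq Sigma).
Hypothesis nopriv : forall q : vQ V, ~~ vpriv q.

Definition projK (c : config V) : Kt V := (cst c, cwtape c, cwpos c, ccell c).
Definition trp (c : config V) (b : bool) :=
  let: (q', x, mm, di, dw) :=
    vdelta (cst c) (tape_sym w (cipos c)) (cwtape c (cwpos c)) (ccell c) false b in
  if vcomm (cst c) then rcons (ctrans c) (mm, if vpub (cst c) then Some b else None)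
  else ctrans c.
Definition mkc (k : Kt V) i tr np nu : config V :=
  @Config Sigma V k.1.1.1 i k.1.1.2 k.1.2 k.2 tr np nu.

Lemma step_eq (P : prover Sigma (vC V)) c b : step P w c false b =
  match lstep (projK c) (tape_sym w (cipos c)) (P w (trp c b)) b with
  | OAcc => OAcc | ORej => ORej
  | ONext (k', d) => match move_in w d (cipos c) with
     | None => ORej
     | Some i' => ONext (mkc k' i' (trp c b) (cnpriv c + vpriv (cst c)) (cnpub c + vpub (cst c)))
     end
  end.
Proof.
rewrite /step /lstep /projK /trp /=.
case: (vdelta _ _ _ _ _ _) => [[[[q' x] mm] di] dw] /=.
case: (move_work _ _) => //= h'. case: (vacc q') => //.
Qed.


Lemma lstep_indep (k : Kt V) s a a' b : ~~ vcomm (qof k) -> lstep k s a b = lstep k s a' b.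
Proof.
case: k => [[[q tp] h] cl] /= hc. rewrite /lstep (negbTE hc).
by case: (vdelta _ _ _ _ _ _) => [[[[q' x] mm] di] dw].
Qed.

Lemma lstep_acc (k : Kt V) s a a' b : lstep k s a b = OAcc -> lstep k s a' b = OAcc.
Proof.
case: k => [[[q tp] h] cl] /=. rewrite /lstep.
case: (vdelta _ _ _ _ _ _) => [[[[q' x] mm] di] dw].
case: (move_work _ _) => // h'. by case: (vacc q').
Qed.

Definition sext (t s : seq (vC V * option bool)) :=
  (size t < size s)%N && (take (size t) s == t).

Definition region (c : config V) b s :=
  if vcomm (cst c) then (s == trp c b) || sext (trp c b) s else sext (ctrans c) s.

Lemma sext_rcons (t : seq (vC V * option bool)) x : sext t (rcons t x).
Proof. rewrite /sext size_rcons ltnSn -cats1 take_size_cat //=. Qed.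

Lemma sext_rcons_trans (t s : seq (vC V * option bool)) x : sext (rcons t x) s -> sext t s.
Proof.
rewrite /sext size_rcons => /andP [h1 /eqP h2].
apply/andP; split; first exact: ltnW.
by rewrite -(@take_takel _ (size t) (size t).+1) // h2 -cats1 take_size_cat.
Qed.

Lemma sext_irr (t : seq (vC V * option bool)) : ~~ sext t t.
Proof. by rewrite /sext ltnn. Qed.

Lemma sext_two (t s : seq (vC V * option bool)) x y :
  sext (rcons t x) s -> sext (rcons t y) s -> x = y.
Proof.
rewrite /sext !size_rcons => /andP [_ /eqP h1] /andP [_ /eqP h2].
by have := rcons_inj (etrans (esym h1) h2) => [[]].
Qed.

Lemma trp_cases c b : (~~ vcomm (cst c) /\ trp c b = ctrans c) \/
  (vcomm (cst c) /\ exists x, trp c b = rcons (ctrans c) x /\ (vpub (cst c) -> x.2 = Some b)).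
Proof.
rewrite /trp. case: (vdelta _ _ _ _ _ _) => [[[[q' x] mm] di] dw].
case hc: (vcomm (cst c)); [right|by left].
split=> //. exists (mm, if vpub (cst c) then Some b else None); split=> //= ->. done.
Qed.

Lemma trp_ext c b s : sext (trp c b) s -> sext (ctrans c) s.
Proof.
by case: (trp_cases c b) => [[_ ->]|[_ [x [-> _]]]] //; apply: sext_rcons_trans.
Qed.

Lemma region_sub c b s : region c b s -> sext (ctrans c) s.
Proof.
rewrite /region; case hc: (vcomm (cst c)) => //.
case/orP => [/eqP ->|]; last exact: trp_ext.
case: (trp_cases c b) => [[hc' _]|[_ [x [-> _]]]]; first by rewrite hc in hc'.
exact: sext_rcons.
Qed.

Lemma region_trp c b : vcomm (cst c) -> region c b (trp c b).
Proof. by rewrite /region => ->; rewrite eqxx. Qed.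

Lemma region_other c s : vpub (cst c) -> (s == trp c false) || sext (trp c false) s -> ~~ region c true s.
Proof.
move=> hp hs. have hc := vpub_comm hp. rewrite /region hc.
case: (trp_cases c false) => [[hc' _]|[_ [x0 [e0 h0]]]]; first by rewrite hc in hc'.
case: (trp_cases c true) => [[hc' _]|[_ [x1 [e1 h1]]]]; first by rewrite hc in hc'.
have nx : x0 <> x1.
  move=> exy; have := h0 hp; rewrite exy (h1 hp). discriminate.
rewrite e0 e1 in hs *. apply/negP => /orP [/eqP es|hs1].
- case/orP: hs => [/eqP|hs0].
    rewrite es => /rcons_inj [e]. exact: nx (esym e).
  by move: hs0; rewrite es /sext !size_rcons ltnn.
- case/orP: hs => [/eqP es|hs0].
  + by move: hs1; rewrite es /sext !size_rcons ltnn.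
  + exact: nx (sext_two hs0 hs1).
Qed.

Lemma step_P (P P' : prover Sigma (vC V)) c b :
  (vcomm (cst c) -> P w (trp c b) = P' w (trp c b)) -> step P w c false b = step P' w c false b.
Proof.
move=> h. rewrite !step_eq.
case hc: (vcomm (cst c)); first by rewrite h.
by rewrite (@lstep_indep _ _ (P w (trp c b)) (P' w (trp c b))) //= hc.
Qed.

Lemma step_next (P : prover Sigma (vC V)) c b c' : step P w c false b = ONext c' ->
  exists k' d i', lstep (projK c) (tape_sym w (cipos c)) (P w (trp c b)) b = ONext (k', d) /\
    move_in w d (cipos c) = Some i' /\
    c' = mkc k' i' (trp c b) (cnpriv c + vpriv (cst c)) (cnpub c + vpub (cst c)).
Proof.
rewrite step_eq. case E: (lstep _ _ _ _) => [||[k' d]] //.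
case hm: (move_in w d (cipos c)) => [i'|] // [<-]. by exists k', d, i'.
Qed.

Lemma step_acc (P : prover Sigma (vC V)) c b : step P w c false b = OAcc ->
  forall a, lstep (projK c) (tape_sym w (cipos c)) a b = OAcc.
Proof.
rewrite step_eq. case E: (lstep _ _ _ _) => [||[k' d]] //.
- move=> _ a. exact: lstep_acc E.
- by case: (move_in w d (cipos c)).
Qed.

Lemma within_np (P : prover Sigma (vC V)) va vr n c : within P w va vr n.+1 c =
  if vacc (cst c) then va else if vrej (cst c) then vr else
  if vpub (cst c) then (oval P w va vr n (step P w c false true) + oval P w va vr n (step P w c false false)) / 2
  else oval P w va vr n (step P w c false false).
Proof. by rewrite within_S (negbTE (nopriv _)); case: (vpub _). Qed.

Lemma locality va vr n : forall c (P P' : prover Sigma (vC V)),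
  (forall s, sext (ctrans c) s -> P w s = P' w s) ->
  within P w va vr n c = within P' w va vr n c.
Proof.
elim: n => [|n IH] c P P' h //.
have E : forall b, oval P w va vr n (step P w c false b) = oval P' w va vr n (step P' w c false b).
  move=> b. rewrite (@step_P P P') => [|hc]; last first.
    apply: h. by case: (trp_cases c b) => [[hc' _]|[_ [x [-> _]]]]; [rewrite hc in hc'|apply: sext_rcons].
  case E: (step P' w c false b) => [||c'] //=.
  apply: IH => s hs. apply: h.
  have [k' [d [i' [_ [_ ec]]]]] := step_next E.
  by move: hs; rewrite ec /= => /trp_ext.
by rewrite !within_np !E.
Qed.

Variable r : nat.
Definition scale (m : nat) : R := INR m / 2 ^ r.

Lemma INR_expn2 n : INR (2 ^ n)%N = 2 ^ n.
Proof. elim: n => [|n IH] //. rewrite expnS mult_INR IH /=. by []. Qed.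

Lemma scale_le1 (m : Tt r) : scale m <= 1.
Proof.
rewrite /scale. have hp : 0 < 2 ^ r by apply: pow_lt; lra.
have h : INR m <= 2 ^ r.
  rewrite -INR_expn2. apply: le_INR. apply/leP. by have := ltn_ord m; rewrite ltnS.
have := Rmult_le_compat_r (/ 2 ^ r) _ _ (Rlt_le _ _ (Rinv_0_lt_compat _ hp)) h.
rewrite Rinv_r; last lra. by [].
Qed.

Lemma scale_ge0 m : 0 <= scale m.
Proof. rewrite /scale. apply: Rmult_le_pos; [apply: pos_INR|]. apply/Rlt_le/Rinv_0_lt_compat/pow_lt; lra. Qed.

Lemma scale0 (m : Tt r) : nat_of_ord m = 0%N -> scale m = 0.
Proof. by rewrite /scale => ->; rewrite /= /Rdiv Rmult_0_l. Qed.

Lemma oval_ge0 (P : prover Sigma (vC V)) n o : 0 <= oval P w 1 0 n o.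
Proof. case: o => [||c'] /=; try lra. by case: (within_bounds P w n c'). Qed.

Lemma oval_mono (P : prover Sigma (vC V)) n n' o : (n <= n')%N -> oval P w 1 0 n o <= oval P w 1 0 n' o.
Proof. case: o => [||c'] /= h; try lra. apply: within_mono => //; lra. Qed.

Definition XI (k : Kt V) (i : nat) (m : Tt r) := forall c, projK c = k -> cipos c = i ->
  forall P0 : prover Sigma (vC V), exists (P : prover Sigma (vC V)) n,
    (forall s, ~~ sext (ctrans c) s -> P w s = P0 w s) /\ scale m <= within P w 1 0 n c.

Lemma branch (X : Kt V -> nat -> Tt r -> Prop) (hX : forall k i m, X k i m -> XI k i m) c a b mb :
  RWof (tape_sym w) (move_in w) X (projK c) (cipos c) a b mb ->
  forall Pin : prover Sigma (vC V), exists (Pout : prover Sigma (vC V)) nb,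
    (forall s, ~~ region c b s -> Pout w s = Pin w s) /\
    scale mb <= oval Pout w 1 0 nb (step Pout w c false b).
Proof.
move=> [h0|[hacc|[[[[q' tp'] h'] cl'] [d [i' [hl [hm hx]]]]]]] Pin.
- exists Pin, 0%N; split=> //. rewrite scale0 //. exact: oval_ge0.
- exists Pin, 0%N; split=> //. rewrite step_eq (lstep_acc _ hacc) /=. exact: scale_le1.
- pose P1 : prover Sigma (vC V) := fun w' s => if vcomm (cst c) && (s == trp c b) then a else Pin w' s.
  pose c' := mkc (q', tp', h', cl') i' (trp c b) (cnpriv c + vpriv (cst c)) (cnpub c + vpub (cst c)).
  have [P [n [hag hsc]]] := hX _ _ _ hx c' erefl erefl P1.
  have hstep : step P w c false b = ONext c'.
    rewrite (@step_P P P1); last first.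
      move=> _; apply: hag. exact: sext_irr.
    rewrite step_eq.
    have -> : lstep (projK c) (tape_sym w (cipos c)) (P1 w (trp c b)) b = ONext ((q', tp', h', cl'), d).
      rewrite /P1. case hc: (vcomm (cst c)); first by rewrite eqxx.
      by rewrite -hl; apply: lstep_indep; rewrite /= hc.
    by rewrite hm.
  exists P, n; split; last by rewrite hstep.
  move=> s hs. rewrite hag; last first.
    apply/negP => hs'. move: hs; rewrite /region.
    case: (trp_cases c b) => [[hc e]|[hc _]]; first by rewrite (negbTE hc) -e hs'.
    by rewrite hc hs' orbT.
  rewrite /P1. case hc: (vcomm (cst c)) => //=.
  case he: (s == trp c b) => //. by move: hs; rewrite /region hc he.
Qed.

Lemma win_prover kk ii (mm : Tt r) : Full w kk ii mm -> XI kk ii mm.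
Proof.
apply: GW_ind => k i m h c hk hi P0.
case: h => [h0|[[h1 h2]|[_ h]]]; last first.
- have eq : qof k = cst c by rewrite -hk.
  case: h => [hacc|[hna [hnr [[hnp [a hrw]]|[hp [a0 [a1 [m0 [m1 [h2m [hrw0 hrw1]]]]]]]]]]].
  + exists P0, 1%N; split=> //. rewrite within_np -eq hacc. exact: scale_le1.
  + rewrite -hk -hi in hrw.
    have [P [n [hag hsc]]] := branch (fun k i m (h : _ /\ _) => h.2) hrw P0.
    exists P, n.+1; split.
      move=> s hs; apply: hag; apply/negP => /region_sub; by rewrite (negbTE hs).
    by rewrite within_np -eq (negbTE hna) (negbTE hnr) (negbTE hnp).
  + rewrite -hk -hi in hrw0 hrw1.
    have [PA [n0 [hagA hscA]]] := branch (fun k i m (h : _ /\ _) => h.2) hrw0 P0.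
    have [PB [n1 [hagB hscB]]] := branch (fun k i m (h : _ /\ _) => h.2) hrw1 PA.
    exists PB, (n0 + n1).+1; split.
      move=> s hs. rewrite hagB; last by apply/negP => /region_sub; rewrite (negbTE hs).
      apply: hagA; by apply/negP => /region_sub; rewrite (negbTE hs).
    rewrite within_np -eq (negbTE hna) (negbTE hnr) hp.
    have e1 : scale m1 <= oval PB w 1 0 (n0 + n1) (step PB w c false true).
      apply: Rle_trans hscB _. apply: oval_mono. exact: leq_addl.
    have e0 : scale m0 <= oval PB w 1 0 (n0 + n1) (step PB w c false false).
      rewrite (@step_P PB PA); last first.
        move=> _; apply: hagB. apply: region_other; first by rewrite -eq.
        by apply/orP; left; apply/eqP.
      apply: Rle_trans hscA _.
      apply: (Rle_trans _ (oval PA w 1 0 (n0 + n1) (step PA w c false false))).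
        apply: oval_mono. exact: leq_addr.
      case E: (step PA w c false false) => [||c0] /=; try lra.
      rewrite (@locality _ _ _ c0 PB PA) //; first lra.
      move=> s hs. apply: hagB. apply: region_other; first by rewrite -eq.
      have [k0 [d0 [i0 [_ [_ ec]]]]] := step_next E.
      by move: hs; rewrite ec /= => ->; rewrite orbT.
    have hm : scale m <= (scale m0 + scale m1) / 2.
      rewrite /scale. have hp2 : 0 < 2 ^ r by apply: pow_lt; lra.
      have : 2 * INR m <= INR m0 + INR m1.
        rewrite -plus_INR. have -> : 2 * INR m = INR (2 * m) by rewrite mult_INR.
        by apply: le_INR; apply/leP.
      move=> hh. rewrite /Rdiv.
      have hi2 : 0 < / 2 ^ r by apply: Rinv_0_lt_compat.
      nra.
    lra.
- by [].
- exists P0, 0%N; split=> //. rewrite scale0 //=. lra.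
Qed.

Hypothesis hbound : public_coins_bounded V r.

Definition Reach (P : prover Sigma (vC V)) c := exists sp su n, run P w sp su n = ONext c.

Lemma step_cnpub (P : prover Sigma (vC V)) c b c' : step P w c false b = ONext c' ->
  cnpub c' = (cnpub c + vpub (cst c))%N.
Proof. by move=> /step_next [k' [d [i' [_ [_ ->]]]]]. Qed.

Lemma run_agree (P : prover Sigma (vC V)) sp su su' n : forall c,
  run P w sp su n = ONext c -> (forall j, (j < cnpub c)%N -> su' j = su j) ->
  run P w sp su' n = ONext c.
Proof.
elim: n => [|n IH] c //=.
case E: (run P w sp su n) => [||c0] //.
case ha: (vacc (cst c0)) => //. case hr: (vrej (cst c0)) => //.
rewrite (negbTE (nopriv _)) /= => hs hag.
have ec := step_cnpub hs.
rewrite (IH c0 E); last first.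
  move=> j hj; apply: hag. rewrite ec. exact: leq_trans hj (leq_addr _ _).
rewrite ha hr (negbTE (nopriv _)) /=.
case hp: (vpub (cst c0)) => /=; last by move: hs; rewrite hp.
rewrite hag; first by move: hs; rewrite hp.
by rewrite ec hp addn1.
Qed.

Lemma Reach_step (P : prover Sigma (vC V)) c (b : bool) c' : Reach P c -> ~~ vacc (cst c) -> ~~ vrej (cst c) ->
  (b -> vpub (cst c)) -> step P w c false b = ONext c' -> Reach P c'.
Proof.
move=> [sp [su [n E]]] ha hr hb hs.
exists sp, (fun j => if j == cnpub c then b else su j), n.+1 => /=.
rewrite (run_agree (su' := fun j => if j == cnpub c then b else su j) E); last first.
  by move=> j hj; rewrite ltn_eqF.
rewrite (negbTE ha) (negbTE hr) (negbTE (nopriv _)) /= eqxx.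
by case: b hb hs => [->|] //; rewrite andbF.
Qed.

Lemma Reach_bound (P : prover Sigma (vC V)) c : Reach P c -> (cnpub c <= r)%N.
Proof.
move=> [sp [su [n]]]. elim: n c => [|n IH] c /=; first by move=> [<-].
case E: (run P w sp su n) => [||c0] //.
case ha: (vacc (cst c0)) => //. case hr: (vrej (cst c0)) => //.
rewrite (negbTE (nopriv _)) /= => hs.
rewrite (step_cnpub hs). case hp: (vpub (cst c0)) => /=.
- rewrite addn1. by apply: (hbound E); rewrite ?ha ?hr ?hp.
- rewrite addn0. exact: IH E.
Qed.

Lemma Reach_pub (P : prover Sigma (vC V)) c : Reach P c -> ~~ vacc (cst c) -> ~~ vrej (cst c) ->
  vpub (cst c) -> (cnpub c < r)%N.
Proof. by move=> [sp [su [n E]]]; apply: hbound E. Qed.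

Lemma gran_branch (P : prover Sigma (vC V)) n c (b : bool) :
  (forall c', Reach P c' -> exists k : nat, within P w 1 0 n c' * 2 ^ r = INR k * 2 ^ (cnpub c')) ->
  Reach P c -> ~~ vacc (cst c) -> ~~ vrej (cst c) -> (b -> vpub (cst c)) ->
  exists k : nat, oval P w 1 0 n (step P w c false b) * 2 ^ r = INR k * 2 ^ (cnpub c + vpub (cst c)).
Proof.
move=> IH hR ha hr hb.
case E: (step P w c false b) => [||c'] /=.
- have hle : (cnpub c + vpub (cst c) <= r)%N.
    case hp: (vpub (cst c)); first by rewrite /= addn1; apply: (Reach_pub hR ha hr); rewrite hp.
    rewrite /= addn0. have := Reach_bound hR. done.
  exists (2 ^ (r - (cnpub c + vpub (cst c))))%N.
  by rewrite INR_expn2 -pow_add plusE subnK // Rmult_1_l.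
- exists 0%N. by rewrite /= !Rmult_0_l.
- have hR' := Reach_step hR ha hr hb E.
  rewrite -(step_cnpub E). exact: IH.
Qed.

Lemma falseP (b : bool) : false -> b. Proof. by []. Qed.

Lemma gran (P : prover Sigma (vC V)) n : forall c, Reach P c ->
  exists k : nat, within P w 1 0 n c * 2 ^ r = INR k * 2 ^ (cnpub c).
Proof.
elim: n => [|n IH] c hR; first by exists 0%N; rewrite /= !Rmult_0_l.
rewrite within_np.
case ha: (vacc (cst c)).
  exists (2 ^ (r - cnpub c))%N.
  have hbd := Reach_bound hR. by rewrite INR_expn2 -pow_add plusE subnK ?Rmult_1_l.
case hr: (vrej (cst c)); first by exists 0%N; rewrite /= !Rmult_0_l.
case hp: (vpub (cst c)).
- have [k1 e1] := @gran_branch P n c true IH hR (negbT ha) (negbT hr) (fun _ => hp).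
  have [k0 e0] := @gran_branch P n c false IH hR (negbT ha) (negbT hr) (@falseP _).
  exists (k1 + k0)%N. rewrite hp addn1 /= in e1 e0. rewrite plus_INR.
  set g1 := oval _ _ _ _ _ _ in e1 *. set g0 := oval _ _ _ _ _ _ in e0 *.
  set t := 2 ^ cnpub c in e1 e0 *. set R2 := 2 ^ r in e1 e0 *.
  nra.
- have [k0 e0] := @gran_branch P n c false IH hR (negbT ha) (negbT hr) (@falseP _).
  exists k0. by rewrite hp addn0 in e0.
Qed.

Lemma scale_le0 (m : Tt r) x : scale m <= x -> x <= 0 -> nat_of_ord m = 0%N.
Proof.
move=> h1 h2. have h3 := scale_ge0 m. have h4 : scale m = 0 by lra.
move: h4; rewrite /scale => h4.
have hp : 0 < 2 ^ r by apply: pow_lt; lra.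
have : INR m = 0.
  have := f_equal (fun x => x * 2 ^ r) h4. rewrite /Rdiv Rmult_assoc Rinv_l; lra.
case: (nat_of_ord m) => [|k] //. rewrite S_INR. have := pos_INR k. lra.
Qed.

Lemma Full0 (k : Kt V) i (m : Tt r) : nat_of_ord m = 0%N -> Full w k i m.
Proof. move=> h. exact: (@GW0 _ _ r (tape_sym w) (move_in w) xpredT (fun _ _ _ => False) k i m h). Qed.

Lemma Full_fold (k : Kt V) i (m : Tt r) :
  Fop (tape_sym w) (move_in w) xpredT (fun _ _ _ => False) (@Full _ V r w) k i m -> Full w k i m.
Proof. exact: (@GW_fold _ _ r (tape_sym w) (move_in w) xpredT (fun _ _ _ => False) k i m). Qed.

Lemma win_branch (P : prover Sigma (vC V)) n c (b : bool) :
  (forall c', Reach P c' -> forall m : Tt r, scale m <= within P w 1 0 n c' -> Full w (projK c') (cipos c') m) ->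
  Reach P c -> ~~ vacc (cst c) -> ~~ vrej (cst c) -> (b -> vpub (cst c)) ->
  forall mb : Tt r, scale mb <= oval P w 1 0 n (step P w c false b) ->
  RWof (tape_sym w) (move_in w) (Full w) (projK c) (cipos c) (P w (trp c b)) b mb.
Proof.
move=> IH hR ha hr hb mb hm.
case E: (step P w c false b) hm => [||c'] /= hm.
- right; left. have H := @step_acc P c b E. exact: H.
- left. apply: scale_le0 hm _. lra.
- have [[[[q' tp'] h'] cl'] [d [i' [hl [hmv ec]]]]] := step_next E.
  right; right. exists (q', tp', h', cl'), d, i'; split=> //; split=> //.
  have := IH c' (Reach_step hR ha hr hb E) mb hm. by rewrite ec.
Qed.

Lemma win_from_prover (P : prover Sigma (vC V)) n : forall c, Reach P c ->
  forall m : Tt r, scale m <= within P w 1 0 n c -> Full w (projK c) (cipos c) m.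
Proof.
elim: n => [|n IH] c hR m hm.
  apply: Full0. apply: (scale_le0 hm). simpl. lra.
move: hm; rewrite within_np => hm.
apply: Full_fold.
case ha: (vacc (cst c)) hm => hm.
  by right; right; split=> //; left.
case hr: (vrej (cst c)) hm => hm.
  left. apply: (scale_le0 hm). simpl. lra.
right; right; split=> //; right; split; first by rewrite /qof /= ha.
split; first by rewrite /qof /= hr.
case hp: (vpub (cst c)) hm => hm.
- right; split=> //.
  have bnd : forall b : bool, (b -> vpub (cst c)) -> exists mb : Tt r,
      scale mb = oval P w 1 0 n (step P w c false b).
    move=> b hb.
    have [k e] := gran_branch (gran n) hR (negbT ha) (negbT hr) hb.
    rewrite hp addn1 in e.
    have hp2 : 0 < 2 ^ r by apply: pow_lt; lra.
    have hlt : (k * 2 ^ (cnpub c).+1 < (2 ^ r).+1)%N.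
      rewrite ltnS. apply/leP. apply: INR_le. rewrite mult_INR !INR_expn2 -e.
      have : oval P w 1 0 n (step P w c false b) <= 1.
        case: (step P w c false b) => [||c'] /=; try lra.
        have [h1 [h2 h3]] := within_bounds P w n c'; lra.
      have : 0 <= oval P w 1 0 n (step P w c false b) by apply: oval_ge0.
      nra.
    exists (Ordinal hlt). rewrite /scale /= mult_INR !INR_expn2 -e /Rdiv Rmult_assoc Rinv_r; lra.
  have [m1 e1] := bnd true (fun _ => hp).
  have [m0 e0] := bnd false (@falseP _).
  exists (P w (trp c false)), (P w (trp c true)), m0, m1.
  split; last split.
  + apply/leP. apply: INR_le. rewrite mult_INR plus_INR.
    move: hm; rewrite -e1 -e0 /scale.
    have hp2 : 0 < 2 ^ r by apply: pow_lt; lra.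
    set a := INR m; set a0 := INR m0; set a1 := INR m1; set R2 := 2 ^ r => hm.
    have hi : 0 < / R2 by apply: Rinv_0_lt_compat.
    move: hm => /= h'. have : (2 * a - (a0 + a1)) * / R2 <= 0 by lra.
    move=> h''. simpl. nra.
  + apply: (@win_branch P n c false IH hR (negbT ha) (negbT hr) (@falseP _) m0). rewrite e0; lra.
  + apply: (@win_branch P n c true IH hR (negbT ha) (negbT hr) (fun _ => hp) m1). rewrite e1; lra.
- left; split=> //. exists (P w (trp c false)).
  exact: (@win_branch P n c false IH hR (negbT ha) (negbT hr) (@falseP _) m hm).
Qed.

End Prover.


Section DFAver.
Variables (Sigma : finType) (Q : finType) (q0 : Q) (d : Q -> Sigma -> Q) (F : pred Q).

Definition dv_delta (q : (Q + bool)%type) (s : tsym Sigma) (g : unit) (cm : unit) (bp bu : bool)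
  : (Q + bool) * unit * unit * move * move :=
  match q with
  | inl x => match s with
             | LEnd => (inl x, tt, tt, MoveR, Stay)
             | Sym a => (inl (d x a), tt, tt, MoveR, Stay)
             | REnd => (inr (F x), tt, tt, Stay, Stay)
             end
  | inr b => (inr b, tt, tt, Stay, Stay)
  end.

Definition dver : verifier Sigma :=
  @Verifier Sigma (Q + bool)%type unit unit tt tt 0 (inl q0)
    xpred0 xpred0 xpred0 (fun q => q == inr true) (fun q => q == inr false)
    (fun q h => h) dv_delta.
End DFAver.

Section DFAverProof.
Variables (Sigma : finType) (Q : finType) (q0 : Q) (d : Q -> Sigma -> Q) (F : pred Q).
Let V := dver q0 d F.

Lemma dver_run (P : prover Sigma (vC V)) w va vr : forall s p (c : config V),
  w = p ++ s -> cst c = inl (foldl d q0 p) -> cipos c = (size p).+1 ->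
  forall n, (size s + 2 <= n)%N ->
  within P w va vr n c = if F (foldl d q0 w) then va else vr.
Proof.
elim=> [|a s IH] p c hw hc hi [|n] hn //.
- rewrite cats0 in hw; subst w.
  rewrite /= hc /=. rewrite /step hc hi /= drop_size /=.
  case: (F (foldl d q0 p)) => //=.
  case: n hn => [|n] hn //=.
- rewrite /= hc /=. rewrite /step hc hi /=.
  have -> : drop (size p) w = a :: s by rewrite hw drop_size_cat.
  rewrite /=.
  have hne : (size p).+1 == (size w).+1 = false.
    by rewrite hw size_cat /= eqSS -{1}(addn0 (size p)) eqn_add2l.
  rewrite hne /=.
  apply: (IH (rcons p a)).
  + by rewrite hw cat_rcons.
  + by rewrite /= foldl_rcons.
  + by rewrite /= size_rcons.
  + by move: hn; rewrite /=; case: n.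
Qed.
End DFAverProof.

Lemma regular_verifier (Sigma : finType) (L : seq Sigma -> Prop) :
  regular L ->
  exists (V : verifier Sigma) (r : nat) (eps : R),
    no_private_coins V /\ public_coins_bounded V r /\
    eps < 1 / 2 /\ verifies V L eps.
Proof.
case=> Q [q0 [d [F HL]]].
exists (dver q0 d F), 0%N, 0.
split; first by [].
split; first by move=> P w sp su n c _ _ _ /=.
split; first lra.
have key : forall (P : prover Sigma unit) w va vr,
    within (V := dver q0 d F) P w va vr (size w + 3) (init_config _) =
    if F (foldl d q0 w) then va else vr.
  move=> P w va vr.
  rewrite addnS. rewrite /= /step /=.
  apply: (@dver_run _ _ q0 d F P w va vr w [::]) => //.
split.
- exists (fun _ _ => tt) => w /HL Fw dl hd. exists (size w + 3)%N.
  rewrite /accept_within key Fw. lra.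
- move=> P w nL dl hd. exists (size w + 3)%N.
  rewrite /reject_within key.
  have -> : F (foldl d q0 w) = false by apply/negP => /HL.
  lra.
Qed.


Section Glue.
Variables (Sigma : finType) (V : verifier Sigma) (r : nat) (eps : R) (L : seq Sigma -> Prop).
Hypotheses (hnp : no_private_coins V) (hb : public_coins_bounded V r) (he : eps < 1 / 2)
  (hv : verifies V L eps).

Let nopriv : forall q : vQ V, ~~ vpriv q := hnp.

Lemma char_L w : L w <-> exists m : Tt r, eps * 2 ^ r < INR m /\
  Full w (projK (init_config V)) 0 m.
Proof.
have hp2 : 0 < 2 ^ r by apply: pow_lt; lra.
split.
- move=> hL. have [[P HP] _] := hv. have := HP w hL ((1 - 2 * eps) / 2).
  case; first lra. move=> n hn. rewrite /accept_within in hn.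
  have hR : Reach w P (init_config V) by exists (fun _ => false), (fun _ => false), 0%N.
  have [k ek] := gran nopriv hb n hR. rewrite /= Rmult_1_r in ek.
  have [h1 [h2 h3]] := within_bounds P w n (init_config V).
  have hk : (k < (2 ^ r).+1)%N.
    rewrite ltnS. apply/leP. apply: INR_le. rewrite INR_expn2 -ek. nra.
  exists (Ordinal hk); split.
    rewrite /= -ek. nra.
  have := @win_from_prover _ _ w nopriv r hb P n (init_config V) hR (Ordinal hk).
  apply. rewrite /scale /= -ek /Rdiv Rmult_assoc Rinv_r; lra.
- move=> [m [hm hF]].
  have [P [n [_ hsc]]] := win_prover nopriv hF (c := init_config V) erefl erefl (fun _ _ => vblankC V).
  apply: NNPP => nL.
  have [_ HR] := hv.
  have hsm : eps < scale r m.
    rewrite /scale. apply: (Rmult_lt_reg_r (2 ^ r)) => //.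
    rewrite /Rdiv Rmult_assoc Rinv_l; lra.
  have := HR P w nL ((scale r m - eps) / 2). case; first lra.
  move=> n' hn'. rewrite /reject_within in hn'.
  have a1 := @within_mono _ _ P w 1 0 ltac:(lra) ltac:(lra) n (n + n') (init_config V) (leq_addr _ _).
  have a2 := @within_mono _ _ P w 0 1 ltac:(lra) ltac:(lra) n' (n + n') (init_config V) (leq_addl _ _).
  have [b1 [b2 b3]] := within_bounds P w (n + n') (init_config V).
  lra.
Qed.

End Glue.

Definition summary (Sigma : finType) (V : verifier Sigma) (r : nat) (u : seq Sigma) :
  {ffun {set (Kt V * Tt r)%type} -> {set (Kt V * Tt r)%type} * {set (Kt V * Tt r)%type}} :=
  [ffun S : {set (Kt V * Tt r)%type} =>
    ([set x | pb (@LG _ V r u (fun k m => (k, m) \in S) x.1 (size u) x.2)],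
     [set x | pb (@LG _ V r u (fun k m => (k, m) \in S) x.1 0 x.2)])].

Lemma LG_set (Sigma : finType) (V : verifier Sigma) (r : nat) u (B : Kt V -> Tt r -> Prop) k i m :
  LG u B k i m <-> LG u (fun k m => (k, m) \in [set x : (Kt V * Tt r)%type | pb (B x.1 x.2)]) k i m.
Proof.
split; apply: GW_goal_mono => k' i' m' [-> h]; split=> //.
- by rewrite inE pbP.
- by move: h; rewrite inE pbP.
Qed.

Lemma summary_ok (Sigma : finType) (V : verifier Sigma) (r : nat) u v :
  summary V r u = summary V r v ->
  (forall (B : Kt V -> Tt r -> Prop) k m, LG u B k (size u) m <-> LG v B k (size v) m) /\
  (forall (B : Kt V -> Tt r -> Prop) k m, LG u B k 0 m <-> LG v B k 0 m).
Proof.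
move=> e. split=> B k m; rewrite LG_set [X in _ <-> X]LG_set;
  set S := [set x : (Kt V * Tt r)%type | pb (B x.1 x.2)];
  have := e; move/ffunP => /(_ S); rewrite !ffunE => -[e1 e0].
- have := e1; move/setP => /(_ (k, m)); rewrite !inE /= => h.
  by split=> H; apply/pbP; [rewrite -h|rewrite h]; apply/pbP.
- have := e0; move/setP => /(_ (k, m)); rewrite !inE /= => h.
  by split=> H; apply/pbP; [rewrite -h|rewrite h]; apply/pbP.
Qed.

Theorem theorem2 (Sigma : finType) (L : seq Sigma -> Prop) :
  regular L <->
  exists (V : verifier Sigma) (r : nat) (eps : R),
    no_private_coins V /\ public_coins_bounded V r /\
    eps < 1 / 2 /\ verifies V L eps.
Proof.
split; first exact: regular_verifier.
move=> [V [r [eps [hnp [hb [he hv]]]]]].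
apply: (@nerode_regular _ _ _ (@summary Sigma V r)) => u v e z.
have [h1 h0] := summary_ok e.
have hg := nerode_game h1 h0 z.
rewrite /iff; split.
- move/(char_L hnp hb he hv) => [m [hm hF]]. apply/(char_L hnp hb he hv).
  exists m; split=> //. by apply/hg.
- move/(char_L hnp hb he hv) => [m [hm hF]]. apply/(char_L hnp hb he hv).
  exists m; split=> //. by apply/hg.
Qed.
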